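(* Let $N\ge 1$, let $\mathbf{a}_1,\dots,\mathbf{a}_N\in\mathbb{R}^3$ and $\mathbf{x}_G\in\mathbb{R}^3$, set $d_i=\|\mathbf{x}_G-\mathbf{a}_i\|$ and $\mathbf{a}_\ast=\frac1N\sum_{i=1}^N\mathbf{a}_i$, and define $$F_{L2}(\mathbf{x},\lambda)=\frac14\sum_{i=1}^N\bigl(\|\mathbf{x}-\mathbf{a}_i\|^2+\lambda^2-d_i^2\bigr)^2,\qquad \mathbf{x}\in\mathbb{R}^3,\ \lambda\in\mathbb{R}.$$ Assume the vectors $\mathbf{a}_1-\mathbf{a}_\ast,\dots,\mathbf{a}_N-\mathbf{a}_\ast$ span $\mathbb{R}^3$. Then $F_{L2}$ has no stationary point $(\mathbf{x},\lambda)$ with $\lambda\neq0$ and $\mathbf{x}\neq\mathbf{x}_G$; more precisely, if $\lambda\ne0$, $\mathbf{x}\ne\mathbf{x}_G$ and $\frac{\partial F_{L2}}{\partial\lambda}(\mathbf{x},\lambda)=0$, then $\nabla_{\mathbf{x}}F_{L2}(\mathbf{x},\lambda)\neq0$. In particular $F_{L2}$ has no local minima with $\lambda\ne0$ and $\mathbf{x}\ne\mathbf{x}_G$.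
   Context: $F_{L2}$ is the squared-range Time of Arrival least-squares objective for exact distances $d_i$ from known base stations $\mathbf{a}_i$ to an object at $\mathbf{x}_G$, augmented with an additional variable $\lambda$. *)

(* Defs.v *)
From HB Require Import structures.
From mathcomp Require Import all_boot all_order all_algebra.
From mathcomp Require Import all_classical all_reals all_analysis.
Set Implicit Arguments. Unset Strict Implicit. Unset Printing Implicit Defensive.
Import Order.TTheory GRing.Theory Num.Theory.
Import numFieldNormedType.Exports.
Local Open Scope ring_scope.

Definition sqnorm3 {R : realType} (v : 'rV[R]_3) : R := \sum_(j < 3) (v 0 j) ^+ 2.

Definition enorm3 {R : realType} (v : 'rV[R]_3) : R := Num.sqrt (sqnorm3 v).

Definition dist_i {R : realType} {N : nat} (a : 'I_N -> 'rV[R]_3) (xG : 'rV[R]_3)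
  (i : 'I_N) : R := enorm3 (xG - a i).

Definition centroid {R : realType} {N : nat} (a : 'I_N -> 'rV[R]_3) : 'rV[R]_3 :=
  N%:R^-1 *: \sum_(i < N) a i.

Definition FL2 {R : realType} {N : nat} (a : 'I_N -> 'rV[R]_3) (xG : 'rV[R]_3)
  (x : 'rV[R]_3) (lam : R) : R :=
  4^-1 * \sum_(i < N) (enorm3 (x - a i) ^+ 2 + lam ^+ 2 - dist_i a xG i ^+ 2) ^+ 2.

Definition e3 {R : realType} (j : 'I_3) : 'rV[R]_3 := delta_mx 0 j.

Definition gradx_FL2 {R : realType} {N : nat} (a : 'I_N -> 'rV[R]_3) (xG : 'rV[R]_3)
  (x : 'rV[R]_3) (lam : R) : 'rV[R]_3 :=
  \row_(j < 3) ('D_(e3 j) (fun y => FL2 a xG y lam) x).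

Definition dlam_FL2 {R : realType} {N : nat} (a : 'I_N -> 'rV[R]_3) (xG : 'rV[R]_3)
  (x : 'rV[R]_3) (lam : R) : R :=
  derive1 (fun l : R => FL2 a xG x l) lam.

Definition centered_span {R : realType} {N : nat} (a : 'I_N -> 'rV[R]_3) : bool :=
  row_full (\matrix_(i < N) (a i - centroid a)).

(* Main.v *)
Require Import Defs.
From HB Require Import structures.
From mathcomp Require Import all_boot all_order all_algebra.
From mathcomp Require Import all_classical all_reals all_analysis.
From mathcomp Require Import ring lra.
Import Order.TTheory GRing.Theory Num.Theory.
Import numFieldNormedType.Exports.
Local Open Scope ring_scope.

Lemma der_poly (R : realType) (p : {poly R}) (f : R -> R) x :
  (forall t, f t = p.[t]) -> derive1 f x = p^`().[x].
Proof.
move=> fE; have -> : f = horner p by apply/funext.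
by rewrite derive1E derive_val.
Qed.

Lemma der_lam (R : realType) (N : nat) (s : 'I_N -> R) (l : R) :
  derive1 (fun l => 4^-1 * \sum_(i < N) (s i + l ^+ 2) ^+ 2) l
  = l * \sum_(i < N) (s i + l ^+ 2).
Proof.
rewrite (@der_poly _ (4^-1 *: \sum_(i < N) ((s i)%:P + 'X^2) ^+ 2)); last first.
  by move=> t; rewrite hornerZ horner_sum; congr (_ * _); apply: eq_bigr => i _;
     rewrite !hornerE.
rewrite derivZ raddf_sum hornerZ horner_sum mulr_sumr mulr_sumr.
apply: eq_bigr => i _.
rewrite /= deriv_exp derivD derivC derivXn !hornerE /=.
by field. Qed.

Lemma inner_der (R : realType) (w : 'I_3 -> R) (j : 'I_3) :
  (\sum_(k < 3) ('X * ((j == k)%:R)%:P + (w k)%:P) ^+ 2)^`().[0] = 2 * w j.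
Proof.
rewrite raddf_sum horner_sum.
under eq_bigr do rewrite /= deriv_exp !(derivD, derivM, derivC, derivX) !hornerE.
rewrite (bigD1 j) //= eqxx big1 => [|k /negbTE]; first by rewrite addr0 /=; ring.
by rewrite eq_sym => -> /=; ring.
Qed.

Lemma inner_val (R : realType) (w : 'I_3 -> R) (j : 'I_3) t :
  (\sum_(k < 3) ('X * ((j == k)%:R)%:P + (w k)%:P) ^+ 2).[t] =
  \sum_(k < 3) (t * (j == k)%:R + w k) ^+ 2.
Proof. by rewrite horner_sum; apply: eq_bigr => k _; rewrite !hornerE. Qed.

Lemma der_x (R : realType) (N : nat) (w : 'I_N -> 'I_3 -> R) (c : 'I_N -> R) (j : 'I_3) :
  derive1 (fun t => 4^-1 * \sum_(i < N) (\sum_(k < 3) (t * (j == k)%:R + w i k) ^+ 2 + c i) ^+ 2) 0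
  = \sum_(i < N) (\sum_(k < 3) (w i k) ^+ 2 + c i) * w i j.
Proof.
rewrite (@der_poly _ (4^-1 *: \sum_(i < N) (\sum_(k < 3) ('X * ((j == k)%:R)%:P + (w i k)%:P) ^+ 2 + (c i)%:P) ^+ 2)); last first.
  move=> t; rewrite hornerZ horner_sum; congr (_ * _); apply: eq_bigr => i _.
  rewrite /= !hornerE horner_sum; congr ((_ + _) ^+ 2); apply: eq_bigr => k _; by rewrite !hornerE.
rewrite derivZ raddf_sum hornerZ horner_sum mulr_sumr.
apply: eq_bigr => i _.
rewrite /= deriv_exp derivD derivC addr0 hornerMn hornerM inner_der expr1 hornerD inner_val hornerC.
have -> : \sum_(k < 3) (0 * (j == k)%:R + w i k) ^+ 2 = \sum_(k < 3) w i k ^+ 2.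
  by apply: eq_bigr => k _; rewrite mul0r add0r.
by rewrite mulr2n; field.
Qed.

Lemma D_as_derive1 (R : realType) (f : 'rV[R]_3 -> R) (x v : 'rV[R]_3) :
  'D_v f x = derive1 (fun t => f (t *: v + x)) 0.
Proof.
rewrite derive1E /derive.
set g1 := (fun h : R => _); set g2 := (fun h : R => _).
suff -> : g1 = g2 by [].
by apply/funext => h; rewrite /g1 /g2 /= scale0r add0r addr0 [h%:A]mulr1.
Qed.

Lemma enorm3_sq (R : realType) (v : 'rV[R]_3) : enorm3 v ^+ 2 = sqnorm3 v.
Proof. rewrite /enorm3 sqr_sqrtr //; apply: sumr_ge0 => j _; exact: sqr_ge0. Qed.

Definition rr {R : realType} {N : nat} (a : 'I_N -> 'rV[R]_3) (xG x : 'rV[R]_3) (lam : R) (i : 'I_N) :=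
  sqnorm3 (x - a i) + lam ^+ 2 - sqnorm3 (xG - a i).

Lemma FL2E (R : realType) (N : nat) (a : 'I_N -> 'rV[R]_3) (xG x : 'rV[R]_3) (lam : R) :
  FL2 a xG x lam = 4^-1 * \sum_(i < N) rr a xG x lam i ^+ 2.
Proof. by rewrite /FL2 /dist_i /rr; congr (_ * _); apply: eq_bigr => i _; rewrite !enorm3_sq. Qed.

Lemma dlamE (R : realType) (N : nat) (a : 'I_N -> 'rV[R]_3) (xG x : 'rV[R]_3) (lam : R) :
  dlam_FL2 a xG x lam = lam * \sum_(i < N) rr a xG x lam i.
Proof.
rewrite /dlam_FL2.
have -> : (fun l => FL2 a xG x l) = (fun l => 4^-1 * \sum_(i < N) ((sqnorm3 (x - a i) - sqnorm3 (xG - a i)) + l ^+ 2) ^+ 2).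
  apply/funext => l; rewrite FL2E /rr; congr (_ * _); apply: eq_bigr => i _.
  by rewrite addrAC.
rewrite der_lam; congr (_ * _); apply: eq_bigr => i _; rewrite /rr; by rewrite addrAC.
Qed.

Lemma gradE (R : realType) (N : nat) (a : 'I_N -> 'rV[R]_3) (xG x : 'rV[R]_3) (lam : R) :
  gradx_FL2 a xG x lam = \row_(j < 3) \sum_(i < N) rr a xG x lam i * (x 0 j - a i 0 j).
Proof.
apply/rowP => j; rewrite !mxE D_as_derive1.
have -> : (fun t => FL2 a xG (t *: e3 j + x) lam) =
  (fun t => 4^-1 * \sum_(i < N) (\sum_(k < 3) (t * (j == k)%:R + (x 0 k - a i 0 k)) ^+ 2
       + (lam ^+ 2 - sqnorm3 (xG - a i))) ^+ 2).
  apply/funext => t; rewrite FL2E /rr; congr (_ * _); apply: eq_bigr => i _.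
  rewrite /sqnorm3; congr (_ ^+ 2).
  have -> : \sum_(j0 < 3) (t *: e3 j + x - a i) 0 j0 ^+ 2 =
            \sum_(k < 3) (t * (j == k)%:R + (x 0 k - a i 0 k)) ^+ 2.
    apply: eq_bigr => k _; rewrite /e3 !mxE eqxx /=; congr (_ ^+ 2); by rewrite eq_sym addrA.
  by rewrite addrA.
rewrite der_x; apply: eq_bigr => i _; congr (_ * _).
rewrite /rr /sqnorm3; under [in RHS]eq_bigr do rewrite !mxE.
ring.
Qed.

Lemma sum3 (R : realType) (f : 'I_3 -> R) : \sum_(k < 3) f k = f 0 + f 1 + f 2.
Proof. by rewrite !big_ord_recr big_ord0 /= add0r; congr (f _ + f _ + f _); apply: val_inj. Qed.

Lemma rr_lin (R : realType) (N : nat) (a : 'I_N -> 'rV[R]_3) (xG x : 'rV[R]_3) (lam : R) i :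
  rr a xG x lam i = (\sum_(k < 3) (x 0 k ^+ 2 - xG 0 k ^+ 2) + lam ^+ 2)
     - 2 * \sum_(k < 3) (x 0 k - xG 0 k) * a i 0 k.
Proof.
rewrite /rr /sqnorm3 !sum3 !mxE. ring.
Qed.

Lemma part1 (R : realType) (N : nat) (a : 'I_N -> 'rV[R]_3) (xG x : 'rV[R]_3) (lam : R) :
  (0 < N)%N -> centered_span a -> x != xG ->
  \sum_(i < N) rr a xG x lam i = 0 ->
  (forall j, \sum_(i < N) rr a xG x lam i * (x 0 j - a i 0 j) = 0) -> False.
Proof.
move=> N0 span xx S G.
set r := rr a xG x lam.
set K := \sum_(k < 3) (x 0 k ^+ 2 - xG 0 k ^+ 2) + lam ^+ 2.
set dot := fun i => \sum_(k < 3) (x 0 k - xG 0 k) * a i 0 k.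
have rE : forall i, r i = K - 2 * dot i by move=> i; rewrite /r rr_lin.
have Ga : forall j, \sum_(i < N) r i * a i 0 j = 0.
  move=> j; have := G j.
  under eq_bigr do rewrite mulrBr.
  by rewrite sumrB -mulr_suml S mul0r sub0r => /eqP; rewrite oppr_eq0 => /eqP.
have Sd : \sum_(i < N) r i * dot i = 0.
  under eq_bigr do rewrite /dot mulr_sumr.
  rewrite exchange_big /=; apply: big1 => k _.
  under eq_bigr do rewrite mulrCA.
  by rewrite -mulr_sumr Ga mulr0.
have Sr2 : \sum_(i < N) r i ^+ 2 = 0.
  have -> : \sum_(i < N) r i ^+ 2 = K * \sum_(i < N) r i - 2 * \sum_(i < N) r i * dot i.
    rewrite mulr_sumr mulr_sumr -sumrB; apply: eq_bigr => i _.
    rewrite {1}expr2 {2}rE; ring.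
  by rewrite S Sd !mulr0 subr0.
have r0 : forall i, r i = 0.
  move=> i; apply/eqP; rewrite -sqrf_eq0; apply/eqP.
  move/eqP: Sr2; rewrite psumr_eq0 => [/allP H|]; last by move=> *; exact: sqr_ge0.
  by apply/eqP; apply: (H i); rewrite mem_index_enum.
have dotE : forall i, dot i = K / 2.
  move=> i; have := rE i; rewrite r0 => /eqP; rewrite eq_sym subr_eq0 => /eqP ->.
  by field.
move/row_fullP: span => [B HB].
pose u : 'cV[R]_3 := (x - xG)^T.
have Mu : (\matrix_(i < N) (a i - centroid a)) *m u = 0.
  apply/matrixP => i k; rewrite (ord1 k) !mxE.
  have -> : \sum_(j < 3) (\matrix_(i0 < N) (a i0 - centroid a)) i j * u j 0 =
     dot i - N%:R^-1 * \sum_(i0 < N) dot i0.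
    rewrite /dot mulr_sumr; under [X in _ - X]eq_bigr do rewrite mulr_sumr.
    rewrite exchange_big /= -sumrB; apply: eq_bigr => j _.
    rewrite /u /centroid !mxE summxE mulrBl mulr_sumr mulr_suml; congr (_ - _); first by rewrite mulrC.
    apply: eq_bigr => i0 _; ring.
  under eq_bigr do rewrite dotE.
  have HN : N%:R != 0 :> R by rewrite pnatr_eq0 -lt0n.
  rewrite sumr_const card_ord dotE -mulr_natr; by field.
have u0 : u = 0 by rewrite -(mul1mx u) -HB -mulmxA Mu mulmx0.
move/negP: xx; apply; apply/eqP.
by apply/eqP; rewrite -subr_eq0; apply/eqP; rewrite -[x - xG]trmxK -/u u0 trmx0.
Qed.

Lemma fermat_poly (R : realType) (f : R -> R) (p : {poly R}) (c : R) :
  (forall t, f t = p.[t]) -> (\forall t \near c, f c <= f t) -> derive1 f c = 0.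
Proof.
move=> fE; have -> : f = horner p by apply/funext.
move/nbhs_ballP => [e /= e0 He].
have H := @derive1_at_min R (horner p) (c - e) (c + e) c.
rewrite derive1E; apply: derive_val; apply: H.
- lra.
- by move=> t _; exact: derivable_horner.
- rewrite in_itv /=; apply/andP; split; lra.
- move=> t; rewrite in_itv /= => /andP [h1 h2]; apply: He.
  rewrite /ball /= ltr_norml; apply/andP; split; lra.
Qed.

Lemma poly_lam (R : realType) (N : nat) (s : 'I_N -> R) :
  exists p : {poly R}, forall l, 4^-1 * \sum_(i < N) (s i + l ^+ 2) ^+ 2 = p.[l].
Proof.
exists (4^-1 *: \sum_(i < N) ((s i)%:P + 'X^2) ^+ 2) => t.
by rewrite hornerZ horner_sum; congr (_ * _); apply: eq_bigr => i _; rewrite !hornerE.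
Qed.

Lemma poly_x (R : realType) (N : nat) (w : 'I_N -> 'I_3 -> R) (c : 'I_N -> R) (j : 'I_3) :
  exists p : {poly R}, forall t,
  4^-1 * \sum_(i < N) (\sum_(k < 3) (t * (j == k)%:R + w i k) ^+ 2 + c i) ^+ 2 = p.[t].
Proof.
exists (4^-1 *: \sum_(i < N) (\sum_(k < 3) ('X * ((j == k)%:R)%:P + (w i k)%:P) ^+ 2 + (c i)%:P) ^+ 2) => t.
rewrite hornerZ horner_sum; congr (_ * _); apply: eq_bigr => i _.
rewrite /= !hornerE horner_sum; congr ((_ + _) ^+ 2); apply: eq_bigr => k _; by rewrite !hornerE.
Qed.

Theorem mainTheorem2 (R : realType) (N : nat) (a : 'I_N -> 'rV[R]_3) (xG : 'rV[R]_3) :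
  (0 < N)%N ->
  centered_span a ->
  (forall (x : 'rV[R]_3) (lam : R),
      lam != 0 -> x != xG -> dlam_FL2 a xG x lam = 0 ->
      gradx_FL2 a xG x lam != 0)
  /\
  (forall (x : 'rV[R]_3) (lam : R),
      lam != 0 -> x != xG ->
      ~ (\forall p \near (x, lam), FL2 a xG x lam <= FL2 a xG p.1 p.2)).
Proof.
move=> N0 span.
have P1 : forall (x : 'rV[R]_3) (lam : R),
      lam != 0 -> x != xG -> dlam_FL2 a xG x lam = 0 ->
      gradx_FL2 a xG x lam != 0.
  move=> x lam l0 xx; rewrite dlamE => /eqP; rewrite mulf_eq0 (negbTE l0) /= => /eqP S.
  apply/negP => /eqP g0.
  apply: (@part1 _ _ a xG x lam N0 span xx S) => j.
  by move/rowP: g0 => /(_ j); rewrite gradE !mxE.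
split => // x lam l0 xx H.
move: (P1 x lam l0 xx) => P1'.
have HD : dlam_FL2 a xG x lam = 0.
  rewrite /dlam_FL2.
  have [p pE] := poly_lam _ _ (fun i => sqnorm3 (x - a i) - sqnorm3 (xG - a i)).
  apply: (@fermat_poly _ _ p) => [t|].
    by rewrite -pE FL2E; congr (_ * _); apply: eq_bigr => i _; rewrite /rr addrAC.
  have hc : ((fun l : R => (x, l)) @ nbhs lam --> (x, lam))%classic.
    exact: (cvg_pair (cvg_cst x) (@cvg_id _ (nbhs lam))).
  exact: (hc _ H).
move/negP: (P1' HD); apply; apply/eqP/rowP => j; rewrite !mxE D_as_derive1.
have [p pE] := poly_x _ _ (fun i k => x 0 k - a i 0 k) (fun i => lam ^+ 2 - sqnorm3 (xG - a i)) j.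
have fE : forall t, FL2 a xG (t *: e3 j + x) lam = p.[t].
  move=> t; rewrite -pE FL2E /rr; congr (_ * _); apply: eq_bigr => i _.
  rewrite /sqnorm3; congr (_ ^+ 2).
  have -> : \sum_(j0 < 3) (t *: e3 j + x - a i) 0 j0 ^+ 2 =
            \sum_(k < 3) (t * (j == k)%:R + (x 0 k - a i 0 k)) ^+ 2.
    apply: eq_bigr => k _; rewrite /e3 !mxE eqxx /=; congr (_ ^+ 2); by rewrite eq_sym addrA.
  by rewrite addrA.
apply: (@fermat_poly _ _ p) => //.
have hc : ((fun t : R => (t *: e3 j + x, lam)) @ nbhs 0 --> (x, lam))%classic.
  have H1 : ((fun t : R => t *: e3 j + x) @ nbhs 0 --> x)%classic.
    suff : ((fun t : R => t *: e3 j + x) @ nbhs 0 --> (0:R) *: e3 j + x)%classic by rewrite scale0r add0r.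
    apply: cvgD; last exact: cvg_cst.
    by apply: cvgZr_tmp; exact: cvg_id.
  exact: (cvg_pair H1 (cvg_cst lam)).
have := hc _ H; rewrite /= scale0r add0r.
by [].
Qed.
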